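(* Let $M$ be a generic regular closed curve with arc-length parameterization $f$. Then the number of elements of the sequence of division points $\mathcal{S}_M$ is even.
   Context: Generic means $f$ lies in the set $\mathcal{G}$: $f$ is regular with only transversal self-crossings, only non-degenerate inflexion points (curvature changes sign and $\det(f',f''')\ne0$) and no undulation points; at least one point of each parallel pair is not an inflexion point; and further finitely many non-degeneracy conditions on parallel pairs (involving curvature, its first two arc-length derivatives, and collinearity of chords) hold. Two distinct points of $M$ form a parallel pair if their tangent lines are parallel. The sequence of division points $\mathcal{S}_M$: if $M$ has inflexion points, it is the set of all parameters $s$ such that $f(s)$ is an inflexion point or the tangent line at $f(s)$ is parallel to the tangent line at some inflexion point; if $M$ has no inflexion points, it is the set of all $s$ with $f'(s)$ parallel to $f'(s_0)$ for a fixed $s_0$ (including $s_0$); in both cases ordered compatibly with the orientation of $M$. *)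

(* Defs.v *)
From Stdlib Require Import Reals Lra List.
From Coquelicot Require Import Coquelicot.
Open Scope R_scope.

(* A plane curve f = (x, y) : R -> R^2, given by its two coordinate functions. *)

Definition smooth (g : R -> R) : Prop :=
  forall (n : nat) (t : R), ex_derive (Derive_n g n) t.

Definition arclength_closed_curve (x y : R -> R) (L : R) : Prop :=
  0 < L /\ smooth x /\ smooth y /\
  (forall s, x (s + L) = x s /\ y (s + L) = y s) /\
  (forall s, (Derive_n x 1 s) ^ 2 + (Derive_n y 1 s) ^ 2 = 1).

Definition detd (x y : R -> R) (i j : nat) (s t : R) : R :=
  Derive_n x i s * Derive_n y j t - Derive_n y i s * Derive_n x j t.

Definition tangent_parallel (x y : R -> R) (s t : R) : Prop :=
  detd x y 1 1 s t = 0.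

(* signed curvature (arc-length parameterization): det(f', f'') *)
Definition curvature (x y : R -> R) (s : R) : R := detd x y 1 2 s s.

Definition changes_sign (k : R -> R) (s : R) : Prop :=
  exists d, 0 < d /\
   ((forall t, s - d < t < s -> k t < 0) /\ (forall t, s < t < s + d -> 0 < k t) \/
    (forall t, s - d < t < s -> 0 < k t) /\ (forall t, s < t < s + d -> k t < 0)).

Definition inflexion (x y : R -> R) (s : R) : Prop :=
  curvature x y s = 0 /\ changes_sign (curvature x y) s.

Definition undulation (x y : R -> R) (s : R) : Prop :=
  curvature x y s = 0 /\ ~ changes_sign (curvature x y) s.

Definition distinct_mod (L s t : R) : Prop :=
  forall k : Z, s <> t + IZR k * L.

(* genericity conditions of the set G that are stated explicitly in the paper *)
Definition generic (x y : R -> R) (L : R) : Prop :=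
  arclength_closed_curve x y L /\
  (forall s t, distinct_mod L s t -> x s = x t -> y s = y t ->
     detd x y 1 1 s t <> 0) /\
  (forall s, inflexion x y s -> detd x y 1 3 s s <> 0) /\
  (forall s, ~ undulation x y s) /\
  (forall s t, distinct_mod L s t -> tangent_parallel x y s t ->
     ~ (inflexion x y s /\ inflexion x y t)).

Definition has_inflexion (x y : R -> R) : Prop := exists s, inflexion x y s.

(* membership in the sequence of division points S_M, with base point s0
   (s0 only matters when M has no inflexion point) *)
Definition division_point (x y : R -> R) (s0 s : R) : Prop :=
  (has_inflexion x y /\
     (inflexion x y s \/ exists t, inflexion x y t /\ tangent_parallel x y s t)) \/
  (~ has_inflexion x y /\ tangent_parallel x y s s0).

(* Main.v *)
Require Import Defs.
From Stdlib Require Import Reals List Arith.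
From Stdlib Require Import Reals Lra List Lia Classical ZArith.
From Coquelicot Require Import Coquelicot.
Open Scope R_scope.

Ltac par := repeat (rewrite ?Nat.even_add, ?Nat.even_succ, <- ?Nat.negb_even in *); simpl in *.

Goal forall n m : nat, Nat.even (n + m + 0) = true -> Nat.even (S n + S m + 0) = true.
intros. par. destruct (Nat.even n), (Nat.even m); simpl in *; congruence. Qed.

Definition sgnb (b:bool) (v:R) : Prop := if b then 0 < v else v < 0.
Definition LS (g : R -> R) c b := exists d, 0<d /\ forall t, c-d<t<c -> sgnb b (g t).
Definition RS (g : R -> R) c b := exists d, 0<d /\ forall t, c<t<c+d -> sgnb b (g t).

Lemma sgnb_uniq b1 b2 v : sgnb b1 v -> sgnb b2 v -> b1 = b2.
Proof. destruct b1, b2; simpl; intros; auto; lra. Qed.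

Lemma sgnb_neq0 b v : sgnb b v -> v <> 0.
Proof. destruct b; simpl; lra. Qed.

Lemma LS_uniq g c b1 b2 : LS g c b1 -> LS g c b2 -> b1 = b2.
Proof.
  intros [d1 [H1 K1]] [d2 [H2 K2]].
  apply (sgnb_uniq _ _ (g (c - Rmin d1 d2 / 2))).
  - apply K1. pose proof (Rmin_l d1 d2). pose proof (Rmin_pos d1 d2 H1 H2). lra.
  - apply K2. pose proof (Rmin_r d1 d2). pose proof (Rmin_pos d1 d2 H1 H2). lra.
Qed.

Lemma RS_uniq g c b1 b2 : RS g c b1 -> RS g c b2 -> b1 = b2.
Proof.
  intros [d1 [H1 K1]] [d2 [H2 K2]].
  apply (sgnb_uniq _ _ (g (c + Rmin d1 d2 / 2))).
  - apply K1. pose proof (Rmin_l d1 d2). pose proof (Rmin_pos d1 d2 H1 H2). lra.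
  - apply K2. pose proof (Rmin_r d1 d2). pose proof (Rmin_pos d1 d2 H1 H2). lra.
Qed.

Lemma real_ind (a:R) (P:R->Prop) :
  P a ->
  (forall c, a<=c -> P c -> exists d, 0<d /\ forall t, c<t<c+d -> P t) ->
  (forall c, a<c -> (forall t, a<=t<c -> P t) -> P c) ->
  forall c, a<=c -> P c.
Proof.
  intros Ha Hs Hl c0 Hc0.
  destruct (classic (P c0)) as [|Hn]; auto. exfalso.
  set (E := fun m => a <= m <= c0 /\ forall t, a<=t<=m -> P t).
  assert (Eb : bound E). { exists c0. intros m [Hm _]. lra. }
  assert (Ee : exists m, E m). { exists a. split. lra. intros t Ht. replace t with a by lra. auto. }
  destruct (completeness E Eb Ee) as [m [Hub Hlub]].
  assert (am : a <= m) by (apply Hub; split; [lra| intros t Ht; replace t with a by lra; auto]).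
  assert (mc : m <= c0) by (apply Hlub; intros z [Hz _]; lra).
  assert (below : forall t, a<=t<m -> P t).
  { intros t Ht. destruct (classic (exists e, E e /\ t < e)) as [[e [[He1 He2] Ht2]]|Hne].
    - apply He2. lra.
    - exfalso. assert (m <= t). { apply Hlub. intros z Hz. destruct (Rle_lt_dec z t); auto.
        exfalso. apply Hne. exists z; auto. } lra. }
  assert (Pm : P m).
  { destruct (Rle_lt_or_eq_dec a m am) as [Hlt|Heq]. apply Hl; auto. subst; auto. }
  destruct (Rle_lt_or_eq_dec m c0 mc) as [Hlt|Heq]; [|subst; auto].
  destruct (Hs m am Pm) as [d [Hd Hd2]].
  set (m' := Rmin (m + d/2) c0).
  assert (E m').
  { assert (m' <= m + d/2) by apply Rmin_l. assert (m' <= c0) by apply Rmin_r.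
    assert (m < m'). { unfold m'. apply Rmin_glb_lt; lra. }
    split. lra. intros t Ht. destruct (Rlt_le_dec t m). apply below; lra.
    destruct (Rle_lt_or_eq_dec m t r). apply Hd2. lra. subst; auto. }
  assert (m < m'). { unfold m'. apply Rmin_glb_lt; lra. }
  pose proof (Hub m' H). lra.
Qed.
Definition bit (b1 b2 : bool) : nat := if Bool.eqb b1 b2 then 0%nat else 1%nat.

Definition Qz (g : R -> R) (Kp : R -> Prop) (a b : R) : Prop :=
  exists l lk, NoDup l /\ NoDup lk /\ (forall z, In z l <-> a<=z<b /\ g z = 0) /\
   (forall z, In z lk <-> a<=z<b /\ g z = 0 /\ Kp z) /\
   forall sa sb, LS g a sa -> LS g b sb -> Nat.even (length l + length lk + bit sa sb) = true.

Definition Hlocal (g : R -> R) (Kp : R -> Prop) : Prop :=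
  forall c, exists bl br, LS g c bl /\ RS g c br /\ (g c <> 0 -> bl = br) /\
     (g c = 0 -> (Kp c <-> bl = br)).

Lemma count_zeros g Kp a : Hlocal g Kp -> forall b, a <= b -> Qz g Kp a b.
Proof.
  intros H. apply real_ind.
  - exists nil, nil. split; [constructor|]. split; [constructor|].
    split; [intros z; simpl; split; [tauto| lra]|].
    split; [intros z; simpl; split; [tauto| lra]|].
    intros sa sb H1 H2. rewrite (LS_uniq _ _ _ _ H1 H2). unfold bit. rewrite Bool.eqb_reflx. reflexivity.
  - intros c ac [l [lk [Nl [Nlk [Ml [Mlk Par]]]]]].
    destruct (H c) as [bl [br [[d0 [Hd0 K0]] [[d1 [Hd1 K1]] [Hne Hz]]]]].
    exists d1. split; auto. intros t Ht.
    assert (nz : forall z, c<z<t -> g z <> 0).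
    { intros z Hz'. apply (sgnb_neq0 br). apply K1. lra. }
    assert (LSt : LS g t br).
    { exists (t-c). split. lra. intros z Hz'. apply K1. lra. }
    assert (LSc : LS g c bl) by (exists d0; auto).
    destruct (classic (g c = 0)) as [gc|gc].
    + assert (Hk := Hz gc).
      assert (cl : ~ In c l) by (intros Hc; apply Ml in Hc; lra).
      destruct (classic (Kp c)) as [kc|kc].
      * exists (c::l), (c::lk). split; [constructor; auto|].
        assert (ck : ~ In c lk) by (intros Hc; apply Mlk in Hc; lra).
        split; [constructor; auto|].
        split.
        { intros z; simpl; rewrite Ml; split.
          - intros [<-|[? ?]]; split; auto; lra.
          - intros [? ?]. destruct (Rlt_le_dec z c). right; split; auto; lra.
            destruct (Rle_lt_or_eq_dec c z r). exfalso; apply (nz z); auto; lra. left; auto. }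
        split.
        { intros z; simpl; rewrite Mlk; split.
          - intros [<-|[? ?]]; split; auto; lra.
          - intros [? [? ?]]. destruct (Rlt_le_dec z c). right; split; auto; lra.
            destruct (Rle_lt_or_eq_dec c z r). exfalso; apply (nz z); auto; lra. left; auto. }
        intros sa sb Ha Hb. rewrite <- (LS_uniq _ _ _ _ LSt Hb).
        specialize (Par sa bl Ha LSc). apply Hk in kc. subst br.
        simpl length. unfold bit in *. par.
        destruct (Nat.even (length l)), (Nat.even (length lk)), sa, bl; simpl in *; congruence.
      * exists (c::l), lk. split; [constructor; auto|]. split; auto.
        split.
        { intros z; simpl; rewrite Ml; split.
          - intros [<-|[? ?]]; split; auto; lra.
          - intros [? ?]. destruct (Rlt_le_dec z c). right; split; auto; lra.
            destruct (Rle_lt_or_eq_dec c z r). exfalso; apply (nz z); auto; lra. left; auto. }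
        split.
        { intros z; rewrite Mlk; split.
          - intros [? [? ?]]; split; auto; lra.
          - intros [? [? ?]]. destruct (Rlt_le_dec z c). split; auto; lra.
            destruct (Rle_lt_or_eq_dec c z r). exfalso; apply (nz z); auto; lra. subst; tauto. }
        intros sa sb Ha Hb. rewrite <- (LS_uniq _ _ _ _ LSt Hb).
        specialize (Par sa bl Ha LSc).
        assert (bl <> br) by (intro E; apply kc; apply Hk; auto).
        simpl length. unfold bit in *. par.
        destruct (Nat.even (length l)), (Nat.even (length lk)), sa, bl, br; simpl in *; congruence.
    + assert (E := Hne gc). subst br.
      exists l, lk. split; auto. split; auto.
      split.
      { intros z; rewrite Ml; split.
        - intros [? ?]; split; auto; lra.
        - intros [? ?]. destruct (Rlt_le_dec z c). split; auto; lra.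
          destruct (Rle_lt_or_eq_dec c z r). exfalso; apply (nz z); auto; lra. subst; tauto. }
      split.
      { intros z; rewrite Mlk; split.
        - intros [? [? ?]]; split; auto; lra.
        - intros [? [? ?]]. destruct (Rlt_le_dec z c). split; auto; lra.
          destruct (Rle_lt_or_eq_dec c z r). exfalso; apply (nz z); auto; lra. subst; tauto. }
      intros sa sb Ha Hb. rewrite <- (LS_uniq _ _ _ _ LSt Hb). auto.
  - intros c ac IH.
    destruct (H c) as [bl [br [[d0 [Hd0 K0]] _]]].
    set (t := (Rmax a (c-d0) + c)/2).
    assert (t1 : a <= Rmax a (c - d0)) by apply Rmax_l.
    assert (t2 : c - d0 <= Rmax a (c - d0)) by apply Rmax_r.
    assert (t3 : Rmax a (c - d0) < c) by (apply Rmax_lub_lt; lra).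
    assert (at' : a <= t < c) by (unfold t; lra).
    assert (dt : c - d0 < t) by (unfold t; lra).
    destruct (IH t at') as [l [lk [Nl [Nlk [Ml [Mlk Par]]]]]].
    assert (nz : forall z, t<=z<c -> g z <> 0).
    { intros z Hz'. apply (sgnb_neq0 bl). apply K0. lra. }
    exists l, lk. split; auto. split; auto.
    split.
    { intros z; rewrite Ml; split.
      - intros [? ?]; split; auto; lra.
      - intros [? ?]. destruct (Rlt_le_dec z t). split; auto; lra.
        exfalso; apply (nz z); auto; lra. }
    split.
    { intros z; rewrite Mlk; split.
      - intros [? [? ?]]; split; auto; lra.
      - intros [? [? ?]]. destruct (Rlt_le_dec z t). split; auto; lra.
        exfalso; apply (nz z); auto; lra. }
    intros sa sb Ha Hb.
    assert (LSc : LS g c bl) by (exists d0; auto).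
    assert (LSt : LS g t bl).
    { exists (t - (c - d0)). split. lra. intros z Hz'. apply K0. lra. }
    rewrite <- (LS_uniq _ _ _ _ LSc Hb). auto.
Qed.

Lemma is_der_comb (f g : R -> R) f' g' c1 c2 s :
  is_derive f s f' -> is_derive g s g' ->
  is_derive (fun u => f u * c1 - g u * c2) s (f' * c1 - g' * c2).
Proof.
  intros Hf Hg.
  apply (is_derive_minus (fun u => f u * c1) (fun u => g u * c2) s (f' * c1) (g' * c2)).
  - apply (is_derive_scal_l f s f' c1 Hf).
  - apply (is_derive_scal_l g s g' c2 Hg).
Qed.

Lemma cont_sign g c : continuity_pt g c -> g c <> 0 ->
  exists b, LS g c b /\ RS g c b.
Proof.
  intros Hc Hn.
  destruct (Hc (Rabs (g c))) as [d [Hd K]]. { apply Rabs_pos_lt; auto. }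
  assert (K' : forall t, Rabs (t - c) < d -> Rabs (g t - g c) < Rabs (g c)).
  { intros t Ht. destruct (Req_dec t c) as [->|Htc]. unfold Rminus. rewrite Rplus_opp_r, Rabs_R0. apply Rabs_pos_lt; auto.
    apply (K t). split. split. exact I. auto. exact Ht. }
  destruct (Rlt_le_dec 0 (g c)) as [Hp|Hp].
  - exists true. split; exists d; split; auto; intros t Ht; simpl;
    assert (Rabs (t - c) < d) by (apply Rabs_def1; lra);
    specialize (K' t H); rewrite (Rabs_right (g c)) in K' by lra;
    apply Rabs_def2 in K'; lra.
  - exists false. split; exists d; split; auto; intros t Ht; simpl;
    assert (Rabs (t - c) < d) by (apply Rabs_def1; lra);
    specialize (K' t H); rewrite (Rabs_left (g c)) in K' by lra;
    apply Rabs_def2 in K'; lra.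
Qed.

Lemma Hlocal_of g Kp : (forall c, continuity_pt g c) ->
  (forall c, g c = 0 -> exists bl br, LS g c bl /\ RS g c br /\ (Kp c <-> bl = br)) ->
  Hlocal g Kp.
Proof.
  intros Hc Hz c. destruct (classic (g c = 0)) as [E|E].
  - destruct (Hz c E) as [bl [br [? [? ?]]]]. exists bl, br. split; [auto|split;[auto|split]]. intro N; contradiction. intros _; auto.
  - destruct (cont_sign g c (Hc c) E) as [b [? ?]]. exists b, b. split; [auto|split;[auto|split]]. intros _; auto. intro N; contradiction.
Qed.

Lemma deriv_change g c l : derivable_pt_lim g c l -> g c = 0 -> l <> 0 ->
  exists bl br, LS g c bl /\ RS g c br /\ bl <> br.
Proof.
  intros Hd Hz Hl.
  destruct (Hd (Rabs l / 2)) as [[d Hdp] K]. { pose proof (Rabs_pos_lt l Hl). lra. }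
  simpl in K.
  assert (K' : forall h, h <> 0 -> Rabs h < d -> exists q, g (c + h) = q * h /\ Rabs (q - l) < Rabs l / 2).
  { intros h Hh Hhd. exists ((g (c+h) - g c)/h). split. rewrite Hz. field. auto. apply K; auto. }
  destruct (Rlt_le_dec 0 l) as [Hp|Hp].
  - rewrite Rabs_right in K' by lra.
    exists false, true. split; [|split; [|discriminate]]; exists d; split; auto; intros t Ht; simpl.
    + destruct (K' (t - c)) as [q [E1 E2]]. lra. apply Rabs_def1; lra.
      replace (c + (t - c)) with t in E1 by ring. apply Rabs_def2 in E2. rewrite E1. nra.
    + destruct (K' (t - c)) as [q [E1 E2]]. lra. apply Rabs_def1; lra.
      replace (c + (t - c)) with t in E1 by ring. apply Rabs_def2 in E2. rewrite E1. nra.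
  - assert (l < 0) by (destruct Hp; auto; contradiction).
    rewrite Rabs_left in K' by lra.
    exists true, false. split; [|split; [|discriminate]]; exists d; split; auto; intros t Ht; simpl.
    + destruct (K' (t - c)) as [q [E1 E2]]. lra. apply Rabs_def1; lra.
      replace (c + (t - c)) with t in E1 by ring. apply Rabs_def2 in E2. rewrite E1. nra.
    + destruct (K' (t - c)) as [q [E1 E2]]. lra. apply Rabs_def1; lra.
      replace (c + (t - c)) with t in E1 by ring. apply Rabs_def2 in E2. rewrite E1. nra.
Qed.

Lemma deriv2_keep g g1 c l :
  (forall s, derivable_pt_lim g s (g1 s)) -> derivable_pt_lim g1 c l ->
  g c = 0 -> g1 c = 0 -> l <> 0 ->
  exists b, LS g c b /\ RS g c b.
Proof.
  intros Hg Hg1 Hz Hz1 Hl.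
  destruct (deriv_change g1 c l Hg1 Hz1 Hl) as [bl [br [[d1 [Hd1 K1]] [[d2 [Hd2 K2]] Hne]]]].
  exists br. split.
  - exists d1. split; auto. intros t Ht.
    destruct (MVT_cor2 g g1 t c) as [xi [E1 E2]]. lra. intros; apply Hg.
    specialize (K1 xi ltac:(lra)). rewrite Hz in E1.
    destruct bl, br; simpl in *; try congruence; nra.
  - exists d2. split; auto. intros t Ht.
    destruct (MVT_cor2 g g1 c t) as [xi [E1 E2]]. lra. intros; apply Hg.
    specialize (K2 xi ltac:(lra)). rewrite Hz in E1.
    destruct br; simpl in *; nra.
Qed.

Lemma periodic_even g Kp L : 0 < L -> (forall s, g (s + L) = g s) -> Hlocal g Kp ->
  exists l lk, NoDup l /\ NoDup lk /\ (forall z, In z l <-> 0<=z<L /\ g z = 0) /\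
   (forall z, In z lk <-> 0<=z<L /\ g z = 0 /\ Kp z) /\
   Nat.even (length l + length lk) = true.
Proof.
  intros HL Hp H.
  destruct (count_zeros g Kp 0 H L ltac:(lra)) as [l [lk [N1 [N2 [M1 [M2 P]]]]]].
  exists l, lk. do 4 (split; auto).
  destruct (H 0) as [bl [_ [[d [Hd K]] _]]].
  assert (A : LS g 0 bl) by (exists d; auto).
  assert (B : LS g L bl).
  { exists d. split; auto. intros t Ht. replace t with ((t - L) + L) by ring. rewrite Hp. apply K. lra. }
  specialize (P bl bl A B). unfold bit in P. rewrite Bool.eqb_reflx, Nat.add_0_r in P. exact P.
Qed.

Lemma per_Z (f : R -> R) L : (forall s, f (s + L) = f s) -> forall k s, f (s + IZR k * L) = f s.
Proof.
  intros Hp.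
  assert (Hn : forall n s, f (s + INR n * L) = f s).
  { induction n; intros s. simpl. rewrite Rmult_0_l, Rplus_0_r. reflexivity.
    rewrite S_INR. replace (s + (INR n + 1) * L) with ((s + INR n * L) + L) by ring.
    rewrite Hp. apply IHn. }
  intros k s. destruct (Z.le_gt_cases 0 k) as [Hk|Hk].
  - replace k with (Z.of_nat (Z.to_nat k)) by lia. rewrite <- INR_IZR_INZ. apply Hn.
  - replace k with (- Z.of_nat (Z.to_nat (-k)))%Z by lia. rewrite opp_IZR, <- INR_IZR_INZ.
    rewrite <- (Hn (Z.to_nat (-k)) (s + - INR (Z.to_nat (- k)) * L)). f_equal. ring.
Qed.

Lemma reduce_mod L : 0 < L -> forall t, exists k, 0 <= t + IZR k * L < L.
Proof.
  intros HL t. destruct (archimed (t / L)) as [A B].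
  exists (1 - up (t/L))%Z. rewrite minus_IZR.
  set (q := t / L) in *. set (n := IZR (up q)) in *.
  assert (t = q * L) by (unfold q; field; lra).
  split; nra.
Qed.

Lemma same_in_period L z t k : 0 < L -> 0 <= z < L -> 0 <= t < L -> z = t + IZR k * L -> z = t.
Proof.
  intros HL Hz Ht E.
  destruct (Z.lt_trichotomy k 0) as [Hk|[Hk|Hk]].
  - assert (IZR k <= -1) by (apply IZR_le; lia). nra.
  - subst. lra.
  - assert (1 <= IZR k) by (apply IZR_le; lia). nra.
Qed.

Lemma len1 (l : list R) t : NoDup l -> (forall z, In z l <-> z = t) -> length l = 1%nat.
Proof.
  intros N M. destruct l as [|a r].
  - exfalso. apply (proj2 (M t)). auto.
  - assert (a = t) by (apply M; left; auto). subst a.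
    destruct r as [|b r]; auto. exfalso.
    assert (b = t) by (apply M; right; left; auto). subst b.
    inversion N. apply H1. left; auto.
Qed.

Lemma union_even (P : R -> R -> Prop) (li : list R) :
  NoDup li ->
  (forall t, In t li -> exists lt, NoDup lt /\ (forall s, In s lt <-> P t s) /\ Nat.even (length lt) = false) ->
  (forall t t' s, In t li -> In t' li -> t <> t' -> P t s -> P t' s -> False) ->
  exists lc, NoDup lc /\ (forall s, In s lc <-> exists t, In t li /\ P t s) /\
    Nat.even (length lc) = Nat.even (length li).
Proof.
  induction li as [|t li IH]; intros N Hl Hd.
  - exists nil. split. constructor. split. intros s; simpl; split; [tauto|]. intros [t [[] _]]. auto.
  - inversion N; subst.
    destruct IH as [lc [N1 [M1 P1]]]; auto.
    { intros t' Ht'. apply Hl. right; auto. }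
    { intros t1 t2 s Q1 Q2. apply Hd; right; auto. }
    destruct (Hl t (or_introl eq_refl)) as [lt [N2 [M2 P2]]].
    exists (lt ++ lc). split.
    { apply NoDup_app; auto. intros s Hs Hs'. apply M2 in Hs. apply M1 in Hs'.
      destruct Hs' as [t' [Ht' Hp]]. apply (Hd t t' s); auto. left; auto. right; auto.
      intro E; subst; contradiction. }
    split.
    { intros s. rewrite in_app_iff, M1, M2. split.
      - intros [A|[t' [B C]]]. exists t; split; auto. left; auto. exists t'; split; auto. right; auto.
      - intros [t' [[E|B] C]]. subst; left; auto. right; exists t'; auto. }
    rewrite length_app. simpl length. par. rewrite P1, P2. destruct (Nat.even (length li)); reflexivity.
Qed.

Lemma X_der (x : R -> R) : smooth x -> forall n s, is_derive (Derive_n x n) s (Derive_n x (S n) s).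
Proof. intros H n s. exact (Derive_correct _ _ (H n s)). Qed.

Lemma der_cont f s l : is_derive f s l -> continuity_pt f s.
Proof.
  intros H. apply continuity_pt_filterlim. apply (ex_derive_continuous f s). exists l; auto.
Qed.

Lemma X_per (x : R -> R) L : (forall s, x (s + L) = x s) -> forall n s, Derive_n x n (s + L) = Derive_n x n s.
Proof. intros Hp n s. rewrite <- Derive_n_comp_trans. apply Derive_n_ext. intros; apply Hp. Qed.

Lemma alg1 a b c d p q : a^2+b^2=1 -> c^2+d^2=1 -> a*d-b*c=0 -> (p*d - q*c = 0 <-> a*q - b*p = 0).
Proof.
  intros H1 H2 H3.
  assert (E1 : p*d - q*c = -(a*c+b*d)*(a*q-b*p) + (p*a+q*b)*(a*d-b*c) + (p*d-q*c)*(1-(a^2+b^2))) by ring.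
  rewrite H1, H3 in E1.
  assert (E2 : (a*c+b*d)^2 + (a*d-b*c)^2 = (a^2+b^2)*(c^2+d^2)) by ring.
  rewrite H1, H2, H3 in E2.
  split; intro H.
  - assert ((a*c+b*d)*(a*q-b*p) = 0) by nra.
    destruct (Rmult_integral _ _ H0) as [Z|Z]; auto. rewrite Z in E2. lra.
  - rewrite H in E1. lra.
Qed.

Lemma alg2 p1 p2 q1 q2 r1 r2 : p1^2+p2^2=1 -> p1*q2 - p2*q1 = 0 -> p1*r2 - p2*r1 = 0 -> q1*r2 - q2*r1 = 0.
Proof.
  intros H1 H2 H3.
  assert (E : (q1*r2 - q2*r1)*(p1^2+p2^2) = (p1*q1+p2*q2)*(p1*r2-p2*r1) - (p1*r1+p2*r2)*(p1*q2-p2*q1)) by ring.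
  rewrite H1, H2, H3 in E. lra.
Qed.

Theorem corollary3p9 (x y : R -> R) (L : R) (s0 : R) :
  generic x y L ->
  exists l : list R,
    NoDup l /\
    (forall s, In s l <-> (0 <= s < L /\ division_point x y s0 s)) /\
    Nat.Even (length l).
Proof.
  intros G. destruct G as [[HL [Sx [Sy [Hper Hunit]]]] [Hcross [Hnd [Hund Hpar]]]].
  assert (Px : forall n s, Derive_n x n (s + L) = Derive_n x n s) by (apply X_per; intros; apply Hper).
  assert (Py : forall n s, Derive_n y n (s + L) = Derive_n y n s) by (apply X_per; intros; apply Hper).
  assert (PxZ : forall n k s, Derive_n x n (s + IZR k * L) = Derive_n x n s) by (intros n; apply per_Z; apply Px).
  assert (PyZ : forall n k s, Derive_n y n (s + IZR k * L) = Derive_n y n s) by (intros n; apply per_Z; apply Py).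
  assert (Dx := X_der x Sx). assert (Dy := X_der y Sy).
  assert (zinf : forall s, curvature x y s = 0 -> inflexion x y s).
  { intros s H. split; auto. apply NNPP. intro N. apply (Hund s). split; auto. }
  assert (Dg : forall t s, derivable_pt_lim (fun u => detd x y 1 1 u t) s
      (Derive_n x 2 s * Derive_n y 1 t - Derive_n y 2 s * Derive_n x 1 t)).
  { intros t s. apply is_derive_Reals. unfold detd. apply is_der_comb; auto. }
  assert (Dg1 : forall t s, derivable_pt_lim (fun u => Derive_n x 2 u * Derive_n y 1 t - Derive_n y 2 u * Derive_n x 1 t) s
      (Derive_n x 3 s * Derive_n y 1 t - Derive_n y 3 s * Derive_n x 1 t)).
  { intros t s. apply is_derive_Reals. apply is_der_comb; auto. }
  assert (Cg : forall t s, continuity_pt (fun u => detd x y 1 1 u t) s).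
  { intros t s. apply (der_cont _ _ _ (proj2 (is_derive_Reals _ _ _) (Dg t s))). }
  assert (Dnz : forall t c, detd x y 1 1 c t = 0 -> curvature x y c <> 0 ->
      Derive_n x 2 c * Derive_n y 1 t - Derive_n y 2 c * Derive_n x 1 t <> 0).
  { intros t c Hz Hk E. apply Hk. unfold curvature, detd in *.
    apply (alg1 (Derive_n x 1 c) (Derive_n y 1 c) (Derive_n x 1 t) (Derive_n y 1 t)); auto. }
  destruct (classic (has_inflexion x y)) as [Hi|Hni].
  2: {
    set (g := fun s => detd x y 1 1 s s0).
    assert (Hg : Hlocal g (fun _ => False)).
    { apply Hlocal_of. intros c; apply Cg.
      intros c Hz. destruct (deriv_change g c _ (Dg s0 c) Hz) as [bl [br [A [B C]]]].
      - apply Dnz; auto. intro K. apply Hni. exists c. apply zinf; auto.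
      - exists bl, br. split; auto. split; auto. split; [tauto| intro; contradiction]. }
    assert (gp : forall s, g (s + L) = g s).
    { intros s. unfold g, detd. rewrite Px, Py. reflexivity. }
    destruct (periodic_even g _ L HL gp Hg) as [l [lk [N1 [N2 [M1 [M2 P]]]]]].
    assert (lk = nil). { destruct lk as [|r lk]; auto. exfalso. apply (proj1 (M2 r)). left; auto. }
    subst lk. simpl in P. rewrite Nat.add_0_r in P.
    exists l. split; auto. split.
    - intros s. rewrite M1. unfold division_point, tangent_parallel. unfold g. tauto.
    - apply Nat.even_spec; auto. }
  assert (Ck : forall s, continuity_pt (curvature x y) s).
  { intros s. unfold curvature, detd.
    apply (der_cont _ _ (Derive_n x 2 s * Derive_n y 2 s + Derive_n x 1 s * Derive_n y 3 s
                        - (Derive_n y 2 s * Derive_n x 2 s + Derive_n y 1 s * Derive_n x 3 s))).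
    apply (is_derive_minus (fun u => Derive_n x 1 u * Derive_n y 2 u) (fun u => Derive_n y 1 u * Derive_n x 2 u));
    apply (is_derive_mult (fun u => Derive_n _ 1 u) (fun u => Derive_n _ 2 u)); auto; intros; apply Rmult_comm. }
  assert (Kp : forall s, curvature x y (s + L) = curvature x y s).
  { intros s. unfold curvature, detd. rewrite !Px, !Py. reflexivity. }
  assert (Hk : Hlocal (curvature x y) (fun _ => False)).
  { apply Hlocal_of; auto. intros c Hz. destruct (zinf c Hz) as [_ [d [Hd [[A B]|[A B]]]]].
    - exists false, true. split. exists d; auto. split. exists d; auto. split; [tauto|discriminate].
    - exists true, false. split. exists d; auto. split. exists d; auto. split; [tauto|discriminate]. }
  destruct (periodic_even _ _ L HL Kp Hk) as [li [lk [N1 [N2 [M1 [M2 P]]]]]].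
  assert (lk = nil). { destruct lk as [|r lk]; auto. exfalso. apply (proj1 (M2 r)). left; auto. }
  subst lk. simpl in P. rewrite Nat.add_0_r in P.
  destruct (union_even (fun t s => 0 <= s < L /\ detd x y 1 1 s t = 0) li N1) as [lc [Nc [Mc Pc]]].
  - intros t Ht. apply M1 in Ht. destruct Ht as [Ht Kt].
    set (g := fun s => detd x y 1 1 s t).
    set (Kpt := fun z => exists k, z = t + IZR k * L).
    assert (Hg : Hlocal g Kpt).
    { apply Hlocal_of. intros c; apply Cg.
      intros c Hz. destruct (classic (Kpt c)) as [[k Ek]|NK].
      - destruct (deriv2_keep g _ c _ (Dg t) (Dg1 t c) Hz) as [b [A B]].
        + rewrite Ek, PxZ, PyZ. unfold curvature, detd in Kt. lra.
        + rewrite Ek, PxZ, PyZ. intro E. apply (Hnd t). apply zinf; auto. unfold detd. lra.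
        + exists b, b. split; auto. split; auto. split; auto. intros _; exists k; auto.
      - assert (kc : curvature x y c <> 0).
        { intro E. apply (Hpar c t). intros k Ek. apply NK. exists k; auto. exact Hz.
          split; apply zinf; auto. }
        destruct (deriv_change g c _ (Dg t c) Hz (Dnz t c Hz kc)) as [bl [br [A [B C]]]].
        exists bl, br. split; auto. split; auto. split; [intro; contradiction| intro; contradiction]. }
    assert (gp : forall s, g (s + L) = g s).
    { intros s. unfold g, detd. rewrite Px, Py. reflexivity. }
    destruct (periodic_even g _ L HL gp Hg) as [lt [lkt [N3 [N4 [M3 [M4 P3]]]]]].
    assert (len1' : length lkt = 1%nat).
    { apply (len1 _ t); auto. intros z. rewrite M4. split.
      - intros [Hz [_ [k Ek]]]. apply (same_in_period L z t k); auto.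
      - intros ->. split; auto. split. unfold g, detd; ring. exists 0%Z. simpl; ring. }
    exists lt. split; auto. split. intros s. rewrite M3. unfold g. tauto.
    rewrite len1' in P3. rewrite Nat.add_1_r, Nat.even_succ, <- Nat.negb_even in P3.
    destruct (Nat.even (length lt)); auto.
  - intros t t' s Ht Ht' Ne [Hs A] [_ B].
    apply M1 in Ht. apply M1 in Ht'.
    apply (Hpar t t').
    + intros k Ek. apply Ne. apply (same_in_period L t t' k); tauto.
    + unfold tangent_parallel, detd in *.
      apply (alg2 (Derive_n x 1 s) (Derive_n y 1 s)); auto; lra.
    + split; apply zinf; tauto.
  - exists lc. split; auto. split.
    + intros s. rewrite Mc. split.
      * intros [t [Ht [Hs Hz]]]. split; auto. left. split; auto. right. exists t.
        apply M1 in Ht. split. apply zinf; tauto. exact Hz.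
      * intros [Hs [[_ [Hinf|[t [Ht Hz]]]]|[N _]]].
        -- exists s. split. apply M1. split; auto. apply Hinf. split; auto. unfold detd; ring.
        -- destruct (reduce_mod L HL t) as [k Hk'].
           exists (t + IZR k * L). split.
           ++ apply M1. split; auto. unfold curvature, detd. rewrite !PxZ, !PyZ. apply Ht.
           ++ split; auto. unfold detd. rewrite !PxZ, !PyZ. apply Hz.
        -- contradiction.
    + apply Nat.even_spec. rewrite Pc. exact P.
Qed.
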